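(* Assume $\mathbf a,\mathbf b\in\Delta^n$ with strictly positive entries, let $\eta>0$, let $X^\eta$ be the unique minimizer of $g_\eta$ over $\mathbb{R}^{n\times n}_+$, and set $\gamma=\|C\|_\infty+2\eta$. Then $$\|X^\eta\mathbf 1_n-\mathbf a\|_1\le\frac{n\gamma}{\tau},\qquad \|(X^\eta)^\top\mathbf 1_n-\mathbf b\|_1\le\frac{n\gamma}{\tau}.$$
   Context: Let $n\ge1$, $C\in\mathbb{R}^{n\times n}$ with nonnegative entries and $\|C\|_\infty=\max_{i,j}|C_{ij}|$; $\tau>0$; $\Delta^n=\{\mathbf x\in\mathbb{R}^n_+:\sum_i x_i=1\}$. For $\mathbf x\in\mathbb{R}^n_+$ and $\mathbf y$ with positive entries, $\mathbf{KL}(\mathbf x\|\mathbf y)=\sum_i x_i\log(x_i/y_i)-x_i+y_i$ (with $0\log0=0$). $\|X\|_2$ is the Frobenius norm, $\mathbf 1_n$ the all-ones vector. $g_\eta(X)=\langle C,X\rangle+\eta\|X\|_2^2+\tau\mathbf{KL}(X\mathbf 1_n\|\mathbf a)+\tau\mathbf{KL}(X^\top\mathbf 1_n\|\mathbf b)$ for $X\in\mathbb{R}^{n\times n}_+$. *)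

(* Defs.v *)
From HB Require Import structures.
From mathcomp Require Import all_boot all_order all_algebra.
From mathcomp Require Import all_classical all_reals all_analysis.
Set Implicit Arguments. Unset Strict Implicit. Unset Printing Implicit Defensive.
Import Order.TTheory GRing.Theory Num.Theory.
Local Open Scope ring_scope.

Section Defs.
Variable R : realType.

(* generalized KL divergence; at x_i = 0 the term x_i * ln(x_i/y_i) is 0 *)
Definition KL (n : nat) (x y : 'cV[R]_n) : R :=
  \sum_(i < n) (x i 0 * ln (x i 0 / y i 0) - x i 0 + y i 0).

Definition nonneg_mx (m n : nat) (X : 'M[R]_(m, n)) : Prop :=
  forall i j, 0 <= X i j.

Definition pos_vec (n : nat) (x : 'cV[R]_n) : Prop := forall i, 0 < x i 0.

Definition in_simplex (n : nat) (x : 'cV[R]_n) : Prop :=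
  (forall i, 0 <= x i 0) /\ \sum_(i < n) x i 0 = 1.

Definition mx_norm_inf (n : nat) (C : 'M[R]_n) : R :=
  \big[Num.max/0]_(i < n) \big[Num.max/0]_(j < n) `|C i j|.

Definition frob_sq (n : nat) (X : 'M[R]_n) : R :=
  \sum_(i < n) \sum_(j < n) X i j ^+ 2.

Definition frob_inner (n : nat) (C X : 'M[R]_n) : R :=
  \sum_(i < n) \sum_(j < n) C i j * X i j.

Definition l1 (n : nat) (v : 'cV[R]_n) : R := \sum_(i < n) `|v i 0|.

Definition ones (n : nat) : 'cV[R]_n := const_mx 1.

Definition g_eta (n : nat) (C : 'M[R]_n) (tau eta : R) (a b : 'cV[R]_n)
  (X : 'M[R]_n) : R :=
  frob_inner C X + eta * frob_sq X + tau * KL (X *m ones n) a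
  + tau * KL (X^T *m ones n) b.

Definition is_minimizer_g (n : nat) (C : 'M[R]_n) (tau eta : R)
  (a b : 'cV[R]_n) (X : 'M[R]_n) : Prop :=
  nonneg_mx X /\ forall Y : 'M[R]_n, nonneg_mx Y ->
    g_eta C tau eta a b X <= g_eta C tau eta a b Y.

End Defs.
Arguments ones {R n}.

(* Main.v *)
Require Import Defs.
From HB Require Import structures.
From mathcomp Require Import all_boot all_order all_algebra.
From mathcomp Require Import all_classical all_reals all_analysis.
From mathcomp Require Import lra ring.
Import Order.TTheory GRing.Theory Num.Theory.
Local Open Scope ring_scope.


Lemma ln_le_sub1 {R : realType} {x : R} : 0 < x -> ln x <= x - 1.
Proof. move=> hx; have := @le_ln1Dx R (x - 1). rewrite addrCA subrr addr0; apply; lra. Qed.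

Lemma ln_ge_1inv {R : realType} {x : R} : 0 < x -> 1 - x^-1 <= ln x.
Proof. move=> hx; have hv : 0 < x^-1 by rewrite invr_gt0.
have := ln_le_sub1 hv; rewrite lnV ?posrE //; lra. Qed.

Definition phi {R : realType} (x a : R) : R := x * ln (x / a) - x + a.

Lemma ln_divE {R : realType} {x y : R} : 0 < x -> 0 < y -> ln (x / y) = ln x - ln y.
Proof. by move=> hx hy; rewrite ln_div ?posrE. Qed.

Lemma phi_cvx {R : realType} (a x y : R) : 0 < a -> 0 <= x -> 0 < y ->
  phi y a - phi x a <= (y - x) * ln (y / a).
Proof.
move=> ha hx hy; rewrite /phi.
rewrite le_eqVlt in hx; case/orP: hx => [/eqP <-|hx].
  rewrite !mul0r; lra.
rewrite !ln_divE //.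
have h := ln_le_sub1 (divr_gt0 hy hx); rewrite ln_divE // in h.
have : x * (ln y - ln x) <= x * (y / x - 1) by rewrite ler_pM2l.
rewrite !mulrBr mulr1 mulrCA divff ?gt_eqF // mulr1 => h2.
set ly := ln y in h2 *; set lx := ln x in h2 *; set la := ln a.
nra.
Qed.

Lemma xlog_ge {R : realType} (a t r : R) : 0 < a -> 0 < t -> 0 <= r -> r - a / t <= r * ln (t * r / a).
Proof.
move=> ha ht hr; rewrite le_eqVlt in hr; case/orP: hr => [/eqP <-|hr].
  rewrite mul0r sub0r oppr_le0; exact/ltW/divr_gt0.
have hz : 0 < t * r / a by rewrite divr_gt0 // mulr_gt0.
have := ln_ge_1inv hz => h.
have : r * (1 - (t * r / a)^-1) <= r * ln (t * r / a) by rewrite ler_pM2l.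
apply: le_trans; rewrite mulrBr mulr1 invf_div; apply: lerD => //.
rewrite lerN2 invfM mulrA mulrC mulrA mulrC !mulrA.
by rewrite -mulrA mulVf ?gt_eqF // mulr1.
Qed.

Lemma abs_from_ln {R : realType} (a r K : R) : 0 < a -> a <= 1 -> 0 < r -> r <= 1 ->
  `|ln (r / a)| <= K -> `|r - a| <= K.
Proof.
move=> ha ha1 hr hr1; rewrite ln_divE //.
have h1 := ln_ge_1inv (divr_gt0 hr ha).
have h2 := ln_ge_1inv (divr_gt0 ha hr).
rewrite !ln_divE // in h1 h2.
rewrite invf_div in h1; rewrite invf_div in h2.
move=> hK; apply: (le_trans _ hK).
case: (lerP a r) => har.

- rewrite ger0_norm; last first. rewrite subr_ge0 ler_ln ?posrE //.
  have : r * (1 - a / r) <= r * (ln r - ln a) by rewrite ler_pM2l.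
  rewrite mulrBr mulr1 mulrCA divff ?gt_eqF // mulr1 => h.
  have hl : 0 <= ln r - ln a by rewrite subr_ge0 ler_ln ?posrE.
  nra.
- rewrite ltr0_norm; last first. rewrite subr_lt0 ltr_ln ?posrE //.
  have : a * (1 - r / a) <= a * (ln a - ln r) by rewrite ler_pM2l.
  rewrite mulrBr mulr1 mulrCA divff ?gt_eqF // mulr1 => h.
  have hl : 0 <= ln a - ln r by rewrite subr_ge0 ler_ln ?posrE // ltW.
  nra.
Qed.

Lemma phi_scale {R : realType} (a t r : R) : 0 < a -> 0 < t -> t < 1 -> 0 <= r ->
  phi (t * r) a - phi r a <= (t - 1) * (r - a / t).
Proof.
move=> ha ht ht1 hr; rewrite le_eqVlt in hr; case/orP: hr => [/eqP <-|hr].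
  rewrite mulr0 subrr sub0r mulrN -mulNr; apply: mulr_ge0.
    by rewrite oppr_ge0 subr_le0 ltW.
  exact/ltW/divr_gt0.
apply: (le_trans (phi_cvx _ _ _ ha (ltW hr) (mulr_gt0 ht hr))).
have -> : t * r - r = (t - 1) * r by rewrite mulrBl mul1r.
rewrite -mulrA; apply: ler_wnM2l; first by rewrite subr_le0 ltW.
exact: (xlog_ge _ _ _ ha ht (ltW hr)).
Qed.

Definition rs {R : realType} {n} (X : 'M[R]_n) i := \sum_(j < n) X i j.
Definition cs {R : realType} {n} (X : 'M[R]_n) j := \sum_(i < n) X i j.

Lemma gE {R : realType} n (C : 'M[R]_n) tau eta a b X :
  g_eta C tau eta a b X = \sum_i \sum_j C i j * X i j + eta * \sum_i \sum_j X i j ^+ 2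
   + tau * \sum_i phi (rs X i) (a i 0) + tau * \sum_j phi (cs X j) (b j 0).
Proof.
rewrite /g_eta /KL /frob_inner /frob_sq /phi /rs /cs; congr (_ + _ * _ + _ * _).
- apply: eq_bigr => i _; rewrite !mxE; congr (_ * ln (_ / _) - _ + _);
  by apply: eq_bigr => j _; rewrite !mxE mulr1.
- apply: eq_bigr => i _; rewrite !mxE; congr (_ * ln (_ / _) - _ + _);
  by apply: eq_bigr => j _; rewrite !mxE mulr1.
Qed.

Lemma sum1_diff {R : realType} n (F G : 'I_n -> R) i :
  (forall k, k != i -> F k = G k) -> \sum_k F k - \sum_k G k = F i - G i.
Proof.
move=> h; rewrite (bigD1 i) // [\sum_k G k](bigD1 i) //=.
rewrite (eq_bigr (fun k => G k)) => [|k /h //].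
by rewrite opprD addrACA subrr addr0.
Qed.

Lemma sum2_diff {R : realType} n (F G : 'I_n -> 'I_n -> R) i j :
  (forall k l, (k != i) || (l != j) -> F k l = G k l) ->
  \sum_k \sum_l F k l - \sum_k \sum_l G k l = F i j - G i j.
Proof.
move=> h; rewrite (@sum1_diff _ _ _ _ i).
  by apply: sum1_diff => l hl; apply: h; rewrite hl orbT.
by move=> k hk; apply: eq_bigr => l _; apply: h; rewrite hk.
Qed.

Lemma rs_ge0 {R : realType} n (X : 'M[R]_n) i : nonneg_mx X -> 0 <= rs X i.
Proof. by move=> h; apply: sumr_ge0 => j _; apply: h. Qed.
Lemma cs_ge0 {R : realType} n (X : 'M[R]_n) j : nonneg_mx X -> 0 <= cs X j.
Proof. by move=> h; apply: sumr_ge0 => i _; apply: h. Qed.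

Lemma pert {R : realType} n (C : 'M[R]_n) tau eta (a b : 'cV[R]_n) X
  (hX : is_minimizer_g C tau eta a b X) (ha : pos_vec a) (hb : pos_vec b)
  (htau : 0 <= tau) i j d :
  0 <= X i j + d -> 0 < rs X i + d -> 0 < cs X j + d ->
  0 <= d * (C i j + eta * (2 * X i j + d) + tau * ln ((rs X i + d) / a i 0)
            + tau * ln ((cs X j + d) / b j 0)).
Proof.
move=> hd hr hc; case: hX => hXnn hmin.
pose Y := \matrix_(k, l) (X k l + (if (k == i) && (l == j) then d else 0)).
have hYij : Y i j = X i j + d by rewrite mxE !eqxx.
have hYo : forall k l, (k != i) || (l != j) -> Y k l = X k l.
  move=> k l h; rewrite mxE; case: ifP => [/andP [/eqP ki /eqP lj]|_].
    by rewrite ki lj !eqxx in h.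
  by rewrite addr0.
have hYnn : nonneg_mx Y.
  move=> k l; case: (boolP ((k != i) || (l != j))) => h; first by rewrite hYo.
  move: h; rewrite negb_or !negbK => /andP [/eqP -> /eqP ->]; by rewrite hYij.
have := hmin Y hYnn; rewrite !gE -subr_ge0.
have e1 : \sum_k \sum_l C k l * Y k l - \sum_k \sum_l C k l * X k l = d * C i j.
  rewrite (@sum2_diff _ _ _ _ i j); last by move=> k l h; rewrite hYo.
  by rewrite hYij mulrDr addrAC subrr add0r mulrC.
have e2 : \sum_k \sum_l Y k l ^+ 2 - \sum_k \sum_l X k l ^+ 2 = d * (2 * X i j + d).
  rewrite (@sum2_diff _ _ _ _ i j); last by move=> k l h; rewrite hYo.
  rewrite hYij; ring.
have rsY : rs Y i = rs X i + d.
  apply/eqP; rewrite -subr_eq0 opprD addrA subr_eq0; apply/eqP.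
  rewrite /rs (@sum1_diff _ _ _ _ j); first by rewrite hYij addrAC subrr add0r.
  by move=> l hl; rewrite hYo // hl orbT.
have csY : cs Y j = cs X j + d.
  apply/eqP; rewrite -subr_eq0 opprD addrA subr_eq0; apply/eqP.
  rewrite /cs (@sum1_diff _ _ _ _ i); first by rewrite hYij addrAC subrr add0r.
  by move=> l hl; rewrite hYo // hl.
have e3 : \sum_k phi (rs Y k) (a k 0) - \sum_k phi (rs X k) (a k 0)
   = phi (rs X i + d) (a i 0) - phi (rs X i) (a i 0).
  rewrite (@sum1_diff _ _ _ _ i) ?rsY // => k hk.
  by rewrite /rs; congr (phi _ _); apply: eq_bigr => l _; rewrite hYo // hk.
have e4 : \sum_k phi (cs Y k) (b k 0) - \sum_k phi (cs X k) (b k 0)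
   = phi (cs X j + d) (b j 0) - phi (cs X j) (b j 0).
  rewrite (@sum1_diff _ _ _ _ j) ?csY // => k hk.
  by rewrite /rs; congr (phi _ _); apply: eq_bigr => l _; rewrite hYo // hk orbT.
set A' := \sum_k \sum_l C k l * Y k l in e1 *.
set A := \sum_k \sum_l C k l * X k l in e1 *.
set B' := \sum_k \sum_l Y k l ^+ 2 in e2 *.
set B := \sum_k \sum_l X k l ^+ 2 in e2 *.
set P' := \sum_k phi (rs Y k) (a k 0) in e3 *.
set P := \sum_k phi (rs X k) (a k 0) in e3 *.
set Q' := \sum_k phi (cs Y k) (b k 0) in e4 *.
set Q := \sum_k phi (cs X k) (b k 0) in e4 *.
have -> : A' + eta * B' + tau * P' + tau * Q' - (A + eta * B + tau * P + tau * Q)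
  = (A' - A) + eta * (B' - B) + tau * (P' - P) + tau * (Q' - Q) by ring.
rewrite e1 e2 e3 e4 => h; apply: (le_trans h).
have p1 := phi_cvx _ _ _ (ha i) (rs_ge0 _ _ i hXnn) hr.
have p2 := phi_cvx _ _ _ (hb j) (cs_ge0 _ _ j hXnn) hc.
rewrite (_ : rs X i + d - rs X i = d) in p1; last by ring.
rewrite (_ : cs X j + d - cs X j = d) in p2; last by ring.
set L1 := ln ((rs X i + d) / a i 0) in p1 *.
set L2 := ln ((cs X j + d) / b j 0) in p2 *.
have -> : d * (C i j + eta * (2 * X i j + d) + tau * L1 + tau * L2)
  = d * C i j + eta * (d * (2 * X i j + d)) + tau * (d * L1) + tau * (d * L2) by ring.
by apply: lerD; [apply: lerD => //|]; apply: ler_wpM2l.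
Qed.

Lemma sum_rs_cs {R : realType} n (X : 'M[R]_n) : \sum_i rs X i = \sum_j cs X j.
Proof. by rewrite /rs /cs exchange_big. Qed.

Lemma mass_le {R : realType} n (C : 'M[R]_n) tau eta (a b : 'cV[R]_n) X
  (hX : is_minimizer_g C tau eta a b X) (hC : nonneg_mx C) (htau : 0 < tau)
  (heta : 0 <= eta) (ha : in_simplex a) (hb : in_simplex b)
  (hapos : pos_vec a) (hbpos : pos_vec b) t :
  0 < t -> t < 1 -> \sum_i rs X i <= t^-1.
Proof.
move=> ht ht1; case: (hX) => hXnn hmin.
pose Y := t *: X.
have hYE : forall k l, Y k l = t * X k l by move=> k l; rewrite mxE.
have hYnn : nonneg_mx Y by move=> k l; rewrite hYE mulr_ge0 // ltW.
have := hmin Y hYnn; rewrite !gE -subr_ge0.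
have e1 : \sum_k \sum_l C k l * Y k l = t * \sum_k \sum_l C k l * X k l.
  rewrite mulr_sumr; apply: eq_bigr => k _; rewrite mulr_sumr; apply: eq_bigr => l _.
  by rewrite hYE mulrCA.
have e2 : \sum_k \sum_l Y k l ^+ 2 = t ^+ 2 * \sum_k \sum_l X k l ^+ 2.
  rewrite mulr_sumr; apply: eq_bigr => k _; rewrite mulr_sumr; apply: eq_bigr => l _.
  by rewrite hYE exprMn.
have rsY : forall k, rs Y k = t * rs X k.
  by move=> k; rewrite /rs mulr_sumr; apply: eq_bigr => l _; rewrite hYE.
have csY : forall k, cs Y k = t * cs X k.
  by move=> k; rewrite /cs mulr_sumr; apply: eq_bigr => l _; rewrite hYE.
set S := \sum_i rs X i.
have e3 : \sum_k phi (rs Y k) (a k 0) - \sum_k phi (rs X k) (a k 0) <= (t - 1) * (S - t^-1).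
  rewrite -sumrB.
  have -> : (t - 1) * (S - t^-1) = \sum_k (t - 1) * (rs X k - a k 0 / t).
    rewrite -mulr_sumr sumrB -mulr_suml ha.2 mul1r.
    by [].
  apply: ler_sum => k _; rewrite rsY; apply: phi_scale => //.
  exact: rs_ge0.
have e4 : \sum_k phi (cs Y k) (b k 0) - \sum_k phi (cs X k) (b k 0) <= (t - 1) * (S - t^-1).
  rewrite -sumrB /S sum_rs_cs.
  have -> : (t - 1) * (\sum_j cs X j - t^-1) = \sum_k (t - 1) * (cs X k - b k 0 / t).
    rewrite -mulr_sumr sumrB -mulr_suml hb.2 mul1r.
    by [].
  apply: ler_sum => k _; rewrite csY; apply: phi_scale => //.
  exact: cs_ge0.
rewrite e1 e2.
set A := \sum_k \sum_l C k l * X k l in e1 *.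
set B := \sum_k \sum_l X k l ^+ 2 in e2 *.
set P' := \sum_k phi (rs Y k) (a k 0) in e3 *.
set P := \sum_k phi (rs X k) (a k 0) in e3 *.
set Q' := \sum_k phi (cs Y k) (b k 0) in e4 *.
set Q := \sum_k phi (cs X k) (b k 0) in e4 *.
have hA : 0 <= A by apply: sumr_ge0 => k _; apply: sumr_ge0 => l _; apply: mulr_ge0.
have hB : 0 <= B by apply: sumr_ge0 => k _; apply: sumr_ge0 => l _; apply: sqr_ge0.
move=> h.
have h2 : 0 <= (t - 1) * (A + eta * (t + 1) * B + tau * (S - t^-1) + tau * (S - t^-1)).
  apply: (le_trans h).
  have -> : t * A + eta * (t ^+ 2 * B) + tau * P' + tau * Q' -
     (A + eta * B + tau * P + tau * Q)
     = (t - 1) * A + eta * (t - 1) * (t + 1) * B + tau * (P' - P) + tau * (Q' - Q) by ring.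
  have -> : (t - 1) * (A + eta * (t + 1) * B + tau * (S - t^-1) + tau * (S - t^-1))
     = (t - 1) * A + eta * (t - 1) * (t + 1) * B + tau * ((t - 1) * (S - t^-1))
       + tau * ((t - 1) * (S - t^-1)) by ring.
  by apply: lerD; [apply: lerD => //|]; apply: ler_wpM2l => //; apply: ltW.
rewrite nmulr_rge0 ?subr_lt0 // in h2.
have h3 : 0 <= eta * (t + 1) * B by apply: mulr_ge0 => //; apply: mulr_ge0 => //; lra.
have h4 : tau * (S - t^-1) <= 0 by lra.
by rewrite pmulr_rle0 // subr_le0 in h4.
Qed.

Lemma lim0 {R : realType} (z K dl : R) : 0 < dl -> 0 <= K ->
  (forall s, 0 < s -> s <= dl -> z <= K * s) -> z <= 0.
Proof.
move=> hdl hK h; rewrite leNgt; apply/negP => hz.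
pose s := Num.min dl (z / (K + 1)).
have hK1 : 0 < K + 1 by lra.
have hs : 0 < s by rewrite lt_min hdl divr_gt0.
have hs2 : s <= z / (K + 1) by rewrite ge_min lexx orbT.
have hs1 : s <= dl by rewrite ge_min lexx.
have := h s hs hs1.
have : K * s <= K * (z / (K + 1)) by rewrite ler_wpM2l.
have : K * (z / (K + 1)) < z.
  rewrite mulrA ltr_pdivrMr // mulrC ltr_pM2l //; lra.
lra.
Qed.

Lemma ln_up {R : realType} (r s a : R) : 0 < r -> 0 < s -> 0 < a ->
  ln ((r + s) / a) <= ln (r / a) + s / r.
Proof.
move=> hr hs ha; rewrite !ln_divE //; last by lra.
have := ln_le_sub1 (divr_gt0 (_ : 0 < r + s) hr); rewrite ln_divE //; try lra.
rewrite mulrDl divff ?gt_eqF //; lra.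
Qed.

Lemma ln_dn {R : realType} (r s a : R) : 0 < s -> s <= r / 2 -> 0 < a ->
  ln (r / a) - 2 * s / r <= ln ((r - s) / a).
Proof.
move=> hs hsr ha.
have hr : 0 < r by lra.
have hrs : 0 < r - s by lra.
rewrite !ln_divE //.
have := ln_le_sub1 (divr_gt0 hr hrs); rewrite ln_divE // => h.
have : r / (r - s) - 1 <= 2 * s / r.
  rewrite lerBlDr ler_pdivrMr // -subr_ge0.
  have -> : (2 * s / r + 1) * (r - s) - r = s * (1 - 2 * s / r).
    field; rewrite gt_eqF //.
  apply: mulr_ge0; first lra.
  rewrite subr_ge0 ler_pdivrMr // mul1r; lra.
lra.
Qed.

Lemma pos_aux {R : realType} (c0 e t a b x y : R) : 0 < t -> 0 < a -> 0 < b ->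
  0 <= e -> 0 <= y -> y <= 1 -> 0 <= x ->
  (forall s, 0 < s -> s <= 1 ->
     0 <= c0 + e * s + t * ln ((x + s) / a) + t * ln ((y + s) / b)) -> 0 < x.
Proof.
move=> ht ha hb he hy hy1 hx h.
move: hx; rewrite le_eqVlt => /orP [/eqP hx0 | //].
pose K := c0 + e + t * ln (2 / b).
pose M := ln a - K / t - 1.
pose s := Num.min 1 (expR M).
have hs : 0 < s by rewrite lt_min ltr01 expR_gt0.
have hs1 : s <= 1 by rewrite ge_min lexx.
have hsM : s <= expR M by rewrite ge_min lexx orbT.
have := h s hs hs1; rewrite -hx0 add0r.
have h1 : e * s <= e by rewrite -{2}(mulr1 e) ler_wpM2l.
have h2 : t * ln ((y + s) / b) <= t * ln (2 / b).
  apply: ler_wpM2l; first exact: ltW.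
  rewrite ler_ln ?posrE ?divr_gt0 //; try lra.
  rewrite ler_pM2r ?invr_gt0 //; lra.
have h3 : t * ln (s / a) <= - K - t.
  rewrite ln_divE //.
  have : ln s <= M by rewrite -(expRK M) ler_ln ?posrE ?expR_gt0.
  rewrite /M => hl.
  have : t * (ln s - ln a) <= t * (- (K / t) - 1) by apply: ler_wpM2l; [exact: ltW | lra].
  rewrite mulrBr mulrBr mulrN mulrCA divff ?gt_eqF // !mulr1.
  lra.
rewrite /K in h3; lra.
Qed.

Lemma le1_of {R : realType} (S : R) : (forall t, 0 < t -> t < 1 -> S <= t^-1) -> S <= 1.
Proof.
move=> h; rewrite leNgt; apply/negP => hS.
have ht : 0 < 2 / (1 + S) by rewrite divr_gt0 //; lra.
have ht1 : 2 / (1 + S) < 1 by rewrite ltr_pdivrMr; lra.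
have := h _ ht ht1; rewrite invf_div ler_pdivlMr; lra.
Qed.

Lemma term_le_sum {R : realType} n (F : 'I_n -> R) i : (forall k, 0 <= F k) -> F i <= \sum_k F k.
Proof.
move=> h; rewrite (bigD1 i) //= lerDl; exact: sumr_ge0.
Qed.

Lemma exists_le {R : realType} n (hn : (0 < n)%N) (F G : 'I_n -> R) :
  \sum_k F k <= \sum_k G k -> exists i, F i <= G i.
Proof.
move=> hs; case/boolP: [exists i, F i <= G i] => [/existsP //|/existsPn h].
have h' : forall i, G i < F i by move=> i; rewrite ltNge; exact: h.
pose i0 := Ordinal hn.
have : \sum_k G k < \sum_k F k.
  rewrite (bigD1 i0) //= [\sum_k F k](bigD1 i0) //=.
  apply: ltr_leD => //; apply: ler_sum => k _; exact: ltW.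
by rewrite ltNge hs.
Qed.

Lemma exists_pos {R : realType} n (F : 'I_n -> R) : 0 < \sum_k F k -> exists i, 0 < F i.
Proof.
move=> hs; case/boolP: [exists i, 0 < F i] => [/existsP //|/existsPn h].
have : \sum_k F k <= 0 by apply: sumr_le0 => k _; rewrite leNgt; exact: h.
by rewrite leNgt hs.
Qed.

Lemma C_le_norm {R : realType} n (C : 'M[R]_n) i j : C i j <= mx_norm_inf C.
Proof.
apply: (le_trans (ler_norm (C i j))).
apply: (le_trans _ (le_bigmax 0 (fun i => \big[Num.max/0]_(j < n) `|C i j|) i)).
exact: (le_bigmax 0 (fun j => `|C i j|) j).
Qed.

Arguments mass_le {R n C tau eta a b X} hX hC htau heta ha hb hapos hbpos {t}.
Arguments pert {R n C tau eta a b X} hX ha hb htau {i j d}.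
Arguments rs_ge0 {R n X} i.
Arguments cs_ge0 {R n X} j.
Arguments term_le_sum {R n} F i.
Arguments exists_le {R n} hn {F G}.
Arguments exists_pos {R n F}.
Arguments pos_aux {R c0 e t a b x y}.
Arguments lim0 {R z K dl}.

Theorem mainTheorem12 (R : realType) (n : nat) (hn : (0 < n)%N)
  (C : 'M[R]_n) (hC : nonneg_mx C) (tau eta : R) (htau : 0 < tau) (heta : 0 < eta)
  (a b : 'cV[R]_n) (ha : in_simplex a) (hb : in_simplex b)
  (hapos : pos_vec a) (hbpos : pos_vec b)
  (X : 'M[R]_n) (hX : is_minimizer_g C tau eta a b X) :
  let gamma := mx_norm_inf C + 2 * eta in
  l1 (X *m ones - a) <= n%:R * gamma / tau /\
  l1 (X^T *m ones - b) <= n%:R * gamma / tau.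
Proof.
move=> gamma; case: (hX) => hXnn _.
have htau0 : 0 <= tau by exact: ltW.
have heta0 : 0 <= eta by exact: ltW.
have hS : \sum_i rs X i <= 1.
  apply: le1_of => t ht ht1; exact: (mass_le hX hC htau heta0 ha hb hapos hbpos ht ht1).
have hSc : \sum_j cs X j <= 1 by rewrite -sum_rs_cs.
have hr1 : forall i, rs X i <= 1.
  move=> i; apply: le_trans hS; apply: term_le_sum => k; exact: rs_ge0.
have hc1 : forall j, cs X j <= 1.
  move=> j; apply: le_trans hSc; apply: term_le_sum => k; exact: cs_ge0.
have hXr : forall i j, X i j <= rs X i by move=> i j; apply: term_le_sum => k; exact: hXnn.
have hXc : forall i j, X i j <= cs X j by move=> i j; apply: (term_le_sum (fun k => X k j)) => k; exact: hXnn.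
have ha1 : forall i, a i 0 <= 1 by move=> i; rewrite -ha.2; apply: (term_le_sum (fun k => a k 0)) => k; exact: ha.1.
have hb1 : forall i, b i 0 <= 1 by move=> i; rewrite -hb.2; apply: (term_le_sum (fun k => b k 0)) => k; exact: hb.1.
pose i0 := Ordinal hn.
(* first-order condition, upward *)
have up : forall i j s, 0 < s -> s <= 1 -> rs X i + s > 0 -> cs X j + s > 0 ->
   0 <= C i j + eta * (2 * X i j) + eta * s + tau * ln ((rs X i + s) / a i 0)
        + tau * ln ((cs X j + s) / b j 0).
  move=> i j s hs hs1 hr hc.
  have hxs : 0 <= X i j + s by have := hXnn i j; lra.
  have := pert hX hapos hbpos htau0 hxs hr hc.
  rewrite pmulr_rge0 // mulrDr; lra.
have hrpos : forall i, 0 < rs X i.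
  move=> i; apply: (pos_aux (c0 := C i i0 + eta * (2 * X i i0)) (y := cs X i0)
    (a := a i 0) (b := b i0 0) (e := eta) (t := tau)) => //.
  - exact: cs_ge0.
  - exact: rs_ge0.
  move=> s hs hs1; apply: up => //.
    by have := rs_ge0 i hXnn; lra.
  by have := cs_ge0 i0 hXnn; lra.
have hcpos : forall j, 0 < cs X j.
  move=> j; apply: (pos_aux (c0 := C i0 j + eta * (2 * X i0 j)) (y := rs X i0)
      (a := b j 0) (b := a i0 0) (e := eta) (t := tau)) => //.
  - exact: rs_ge0.
  - exact: cs_ge0.
  move=> s hs hs1; have := up i0 j s hs hs1.
  have h1 := rs_ge0 i0 hXnn; have h2 := cs_ge0 j hXnn.
  have h3 : 0 < rs X i0 + s by lra.
  have h4 : 0 < cs X j + s by lra.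
  move=> /(_ h3 h4); lra.
pose u i := ln (rs X i / a i 0).
pose v j := ln (cs X j / b j 0).
have hB : forall i j, - gamma <= tau * (u i + v j).
  move=> i j.
  have hX1 : X i j <= 1 := le_trans (hXr i j) (hr1 i).
  have hCg : C i j + eta * (2 * X i j) <= gamma.
    rewrite /gamma; apply: lerD; first exact: C_le_norm.
    have : eta * X i j <= eta * 1 := ler_wpM2l heta0 hX1.
    rewrite mulrCA; lra.
  suff : - (tau * (u i + v j)) - (C i j + eta * (2 * X i j)) <= 0 by lra.
  apply: (lim0 (K := eta + tau / rs X i + tau / cs X j) ltr01).
    by apply: addr_ge0; [apply: addr_ge0 => //|]; apply: divr_ge0 => //; apply: ltW.
  move=> s hs hs1.
  have := up i j s hs hs1 (addr_gt0 (hrpos i) hs) (addr_gt0 (hcpos j) hs).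
  have l1 := ln_up _ _ _ (hrpos i) hs (hapos i).
  have l2 := ln_up _ _ _ (hcpos j) hs (hbpos j).
  have l1' := ler_wpM2l htau0 l1; have l2' := ler_wpM2l htau0 l2.
  rewrite /u /v.
  have -> : (eta + tau / rs X i + tau / cs X j) * s
     = eta * s + tau * (s / rs X i) + tau * (s / cs X j).
    by ring.
  rewrite !mulrDr in l1' l2' *; lra.
have hA : forall i j, 0 < X i j -> u i + v j <= 0.
  move=> i j hxij.
  suff : tau * (u i + v j) <= 0 by rewrite pmulr_rle0.
  apply: (lim0 (dl := X i j / 2) (K := eta + tau * (2 / rs X i) + tau * (2 / cs X j))).
  - by apply: divr_gt0.
  - apply: addr_ge0; [apply: addr_ge0 => //|]; apply: mulr_ge0 => //;
      apply: divr_ge0 => //; apply: ltW; auto.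
  move=> s hs hsX.
  have hsr : s <= rs X i / 2 by apply: (le_trans hsX); rewrite ler_pM2r ?hXr.
  have hsc : s <= cs X j / 2 by apply: (le_trans hsX); rewrite ler_pM2r ?hXc.
  have h0 : 0 <= X i j + - s by lra.
  have hr' : 0 < rs X i + - s by have := hrpos i; lra.
  have hc' : 0 < cs X j + - s by have := hcpos j; lra.
  have := pert hX hapos hbpos htau0 h0 hr' hc'.
  rewrite mulNr oppr_ge0 pmulr_rle0 //.
  have l1 := ln_dn _ _ _ hs hsr (hapos i).
  have l2 := ln_dn _ _ _ hs hsc (hbpos j).
  have l1' := ler_wpM2l htau0 l1; have l2' := ler_wpM2l htau0 l2.
  have hCij := hC i j.
  have hXij := hXnn i j.
  have hex : 0 <= eta * (2 * X i j) by apply: mulr_ge0 => //; lra.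
  rewrite /u /v.
  have -> : (eta + tau * (2 / rs X i) + tau * (2 / cs X j)) * s
     = eta * s + tau * (2 * s / rs X i) + tau * (2 * s / cs X j).
    by ring.
  rewrite !mulrDr !mulrN in l1' l2' *.

  lra.
have [ia hia] : exists i, rs X i <= a i 0 by apply: exists_le => //; rewrite ha.2.
have [jb hjb] : exists j, cs X j <= b j 0 by apply: exists_le => //; rewrite hb.2.
have hua : u ia <= 0.
  by apply: ln_le0; rewrite ler_pdivrMr ?hapos // mul1r.
have hvb : v jb <= 0.
  by apply: ln_le0; rewrite ler_pdivrMr ?hbpos // mul1r.
have gtau : forall w, - gamma <= tau * w -> - (gamma / tau) <= w.
  by move=> w h; rewrite -mulNr ler_pdivrMr // [w * _]mulrC.
have hu : forall i, `|u i| <= gamma / tau.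
  move=> i; rewrite ler_norml; apply/andP; split.
    have := gtau _ (hB i jb); lra.
  have [j hj] := exists_pos (hrpos i).
  have := hA i j hj; have := gtau _ (hB ia j); lra.
have hv : forall j, `|v j| <= gamma / tau.
  move=> j; rewrite ler_norml; apply/andP; split.
    have := gtau _ (hB ia j); lra.
  have [i hi] := @exists_pos _ _ (fun i => X i j) (hcpos j).
  have := hA i j hi; have := gtau _ (hB i jb); lra.
have fin : forall (F : 'I_n -> R), (forall i, `|F i| <= gamma / tau) ->
    \sum_i `|F i| <= n%:R * gamma / tau.
  move=> F hF; apply: (le_trans (ler_sum _ (fun i _ => hF i))).
  by rewrite sumr_const card_ord -mulrA mulr_natl.
split.
- rewrite /l1; apply: (le_trans _ (fin (fun i => rs X i - a i 0) _)).
    apply: ler_sum => i _; rewrite !mxE; rewrite le_eqVlt; apply/orP; left; apply/eqP; congr (`|_ - _|).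
    by apply: eq_bigr => j _; rewrite !mxE mulr1.
  by move=> i; apply: abs_from_ln; [exact: hapos | exact: ha1 | exact: hrpos | exact: hr1 | exact: hu].
- rewrite /l1; apply: (le_trans _ (fin (fun j => cs X j - b j 0) _)).
    apply: ler_sum => j _; rewrite !mxE; rewrite le_eqVlt; apply/orP; left; apply/eqP; congr (`|_ - _|).
    by apply: eq_bigr => i _; rewrite !mxE mulr1.
  by move=> j; apply: abs_from_ln; [exact: hbpos | exact: hb1 | exact: hcpos | exact: hc1 | exact: hv].
Qed.
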